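(* Let $k$ be a positive integer. The triangular grid graph $T_k$ with $k$ levels is cyclically orderable if and only if $k\le 4$.
   Context: For a positive integer $k$, the triangular grid graph $T_k$ with $k$ levels is the graph whose vertices are the pairs $(i,j)$ of integers with $0\le j\le i\le k-1$, and in which $(i,j)$ is adjacent to $(i,j+1)$ (when $j+1\le i$), to $(i+1,j)$ and to $(i+1,j+1)$ (when $i+1\le k-1$); it is the triangular lattice cut into the shape of a large triangle with $k$ vertices on each side. A cyclic base ordering (CBO) of a connected graph $G$ is a cyclic ordering of $E(G)$, i.e. a bijection $\mathcal{O}:E(G)\to\{1,\dots,|E(G)|\}$, such that for every $i\in\{1,\dots,|E(G)|\}$ the edges $\mathcal{O}^{-1}(i),\mathcal{O}^{-1}(i+1),\dots,\mathcal{O}^{-1}(i+|V(G)|-2)$ (indices taken cyclically modulo $|E(G)|$) induce a spanning tree of $G$. $G$ is cyclically orderable if it has a CBO. The one-vertex edgeless graph $T_1$ is regarded as trivially cyclically orderable. *)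

(* Defs.v *)
From mathcomp Require Import all_boot.
Set Implicit Arguments. Unset Strict Implicit. Unset Printing Implicit Defensive.

Section Graphs.
Variable V : finType.
Variable adj : rel V.

Definition edges : {set {set V}} :=
  [set e : {set V} | [exists x, exists y, adj x y && (e == [set x; y])]].

Definition adjF (F : {set {set V}}) : rel V := fun x y => (x != y) && ([set x; y] \in F).

Definition has_cycle (F : {set {set V}}) : Prop :=
  exists c : seq V, [/\ 3 <= size c, uniq c & cycle (adjF F) c].

Definition spanning_tree (F : {set {set V}}) : Prop :=
  [/\ F \subset edges,
      (forall x y : V, connect (adjF F) x y) & ~ has_cycle F].

(* A cyclic base ordering, given as the list s = [O^-1(1); ...; O^-1(|E|)]
   of all edges, each exactly once; every cyclic window of |V|-1 consecutive
   edges induces a spanning tree. *)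
Definition is_CBO (s : seq {set V}) : Prop :=
  perm_eq s (enum edges) /\
  forall i, i < size s ->
    spanning_tree [set nth set0 s ((i + t) %% size s) | t : 'I_(#|V|.-1)].

Definition cyclically_orderable : Prop := exists s, is_CBO s.

End Graphs.

Definition Tvert (k : nat) := {p : 'I_k * 'I_k | p.2 <= p.1}.

Definition Tadj0 (k : nat) (u v : Tvert k) : bool :=
  let: (i, j) := (nat_of_ord (val u).1, nat_of_ord (val u).2) in
  let: (i', j') := (nat_of_ord (val v).1, nat_of_ord (val v).2) in
  ((i' == i) && (j' == j.+1)) || ((i' == i.+1) && ((j' == j) || (j' == j.+1))).

Definition Tadj (k : nat) : rel (Tvert k) := fun u v => Tadj0 u v || Tadj0 v u.
Arguments Tadj k : clear implicits.

(* Main.v *)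
Require Import Defs.
From mathcomp Require Import all_boot zify.
Set Implicit Arguments. Unset Strict Implicit. Unset Printing Implicit Defensive.

Section Gen.
Variable V : finType.
Variable adj : rel V.

Lemma set2_eq (x y x' y' : V) :
  [set x; y] = [set x'; y'] -> (x = x' /\ y = y') \/ (x = y' /\ y = x').
Proof.
move=> E.
have hx : x \in [set x'; y'] by rewrite -E set21.
have hy : y \in [set x'; y'] by rewrite -E set22.
have hx' : x' \in [set x; y] by rewrite E set21.
have hy' : y' \in [set x; y] by rewrite E set22.
case/set2P: hx => hx; case/set2P: hy => hy; case/set2P: hx' => hx'; case/set2P: hy' => hy'; subst; auto.
Qed.

Lemma exists_max (T : eqType) (f : T -> nat) (c : seq T) :
  c != [::] -> exists2 x, x \in c & forall y, y \in c -> f y <= f x.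
Proof.
elim: c => // a c IH _.
case: (eqVneq c [::]) => [-> | cn].
  by exists a; rewrite ?mem_head // => y; rewrite inE => /eqP ->.
have [x xc xm] := IH cn.
case: (leqP (f a) (f x)) => h.
  exists x; first by rewrite inE xc orbT.
  by move=> y; rewrite inE => /orP [/eqP -> // | /xm].
exists a; first by rewrite mem_head.
move=> y; rewrite inE => /orP [/eqP -> // | /xm hy]; exact: leq_trans hy (ltnW h).
Qed.

Lemma adjF_sym (F : {set {set V}}) : symmetric (adjF F).
Proof. by move=> x y; rewrite /adjF eq_sym; congr (_ && _); rewrite setUC. Qed.

Lemma tree_cert (F : {set {set V}}) (r : V) (par : V -> V) (d : V -> nat) :
  (forall x, x != r -> [set x; par x] \in F /\ d (par x) < d x) ->
  (forall e, e \in F -> exists2 x, x != r & e = [set x; par x]) ->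
  (forall x y, connect (adjF F) x y) /\ ~ has_cycle F.
Proof.
move=> H1 H2; split.
  have toR : forall x, connect (adjF F) x r.
    move=> x; elim: {x}(d x).+1 {-2}x (ltnSn (d x)) => // n IH x hx.
    case: (eqVneq x r) => [-> | xr]; first exact: connect0.
    have [hF hd] := H1 x xr.
    have hp : d (par x) < n by lia.
    apply: connect_trans (connect1 _) (IH _ hp).
    rewrite /adjF hF andbT; apply/eqP => e.
    by rewrite -e ltnn in hd.
  by move=> x y; apply: connect_trans (toR x) _; rewrite (sym_connect_sym (@adjF_sym F)).
move=> [c [sz uq cy]].
have [x xc xmax] : exists2 x, x \in c & forall y, y \in c -> d y <= d x.
  by apply: exists_max; case: c sz {uq cy}.
case: (rot_to xc) => i p Hrot.
have cy' : cycle (adjF F) (x :: p) by rewrite -Hrot rot_cycle.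
have uq' : uniq (x :: p) by rewrite -Hrot rot_uniq.
have sz' : 3 <= size (x :: p) by rewrite -Hrot size_rot.
have mem' : forall y, y \in x :: p -> d y <= d x by move=> y; rewrite -Hrot mem_rot; exact: xmax.
have key : forall a, a \in x :: p -> adjF F x a -> a = par x.
  move=> a ac /andP [_ hF].
  have [w wr E] := H2 _ hF.
  case: (set2_eq E) => [[-> ->] // | [ex ea]].
  have [_ hd] := H1 w wr.
  have := mem' a ac; rewrite ea ex; lia.
case: p sz' cy' uq' mem' key {Hrot} => // y p sz' cy' uq' mem' key.
case/lastP: p sz' cy' uq' mem' key => [//|q z] sz' cy' uq' mem' key.
have exy : adjF F x y by move: cy' => /= /andP [h _]; exact: h.
have ezx : adjF F z x.
  move: cy' => /= /andP [_]; rewrite rcons_path last_rcons => /andP [_ h]; exact: h.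
have hy : y = par x by apply: key exy; rewrite !inE eqxx orbT.
have hz : z = par x.
  by apply: key; [rewrite !inE mem_rcons mem_head !orbT | rewrite adjF_sym].
move: uq'; rewrite /= => /andP [_ /andP [/negP yq _]].
by apply: yq; rewrite hy -hz mem_rcons mem_head.
Qed.

End Gen.

Definition enc k (x : Tvert k) : nat * nat := (nat_of_ord (val x).1, nat_of_ord (val x).2).
Definition validp k (p : nat * nat) := (p.1 < k) && (p.2 <= p.1).
Definition adj0N (u v : nat * nat) : bool :=
  ((v.1 == u.1) && (v.2 == u.2.+1)) || ((v.1 == u.1.+1) && ((v.2 == u.2) || (v.2 == u.2.+1))).
Definition adjN u v := adj0N u v || adj0N v u.

Definition mv k (Hk : 0 < k) (p : nat * nat) : Tvert k :=
  exist (fun q : 'I_k * 'I_k => q.2 <= q.1)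
    (Ordinal (ltn_pmod p.1 Hk),
     Ordinal (leq_ltn_trans (geq_minr (p.2 %% k) (p.1 %% k)) (ltn_pmod p.1 Hk)))
    (geq_minr _ _).

Section Enc.
Variables (k : nat) (Hk : 0 < k).

Lemma enc_mv p : validp k p -> enc (mv Hk p) = p.
Proof.
case: p => a b; rewrite /validp /enc /= => /andP [ha hb].
rewrite !modn_small //; last lia.
by rewrite (minn_idPl hb).
Qed.

Lemma enc_valid (x : Tvert k) : validp k (enc x).
Proof. by case: x => [[a b] h]; rewrite /validp /= h ltn_ord. Qed.

Lemma mv_enc (x : Tvert k) : mv Hk (enc x) = x.
Proof.
case: x => [[a b] h]; apply: val_inj => /=.
have hb : (b : nat) <= a := h.
congr pair; apply: val_inj => /=.
  by rewrite modn_small.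
by rewrite !modn_small // (minn_idPl hb).
Qed.

Lemma enc_inj : injective (@enc k).
Proof. exact: can_inj mv_enc. Qed.

Lemma mv_inj p q : validp k p -> validp k q -> mv Hk p = mv Hk q -> p = q.
Proof. by move=> hp hq e; rewrite -(enc_mv hp) -(enc_mv hq) e. Qed.

Lemma Tadj_enc (x y : Tvert k) : Tadj k x y = adjN (enc x) (enc y).
Proof. by []. Qed.

Definition verts := [seq (i, j) | i <- iota 0 k, j <- iota 0 i.+1].

Lemma mem_verts p : (p \in verts) = validp k p.
Proof.
apply/allpairsPdep/idP => [[i [j [hi hj ->]]] | ].
  by move: hi hj; rewrite !mem_iota /validp /=; lia.
case: p => a b; rewrite /validp /= => h; exists a, b; split; rewrite ?inE ?mem_iota //; move: h; clear; lia.
Qed.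

Lemma uniq_verts : uniq verts.
Proof.
apply: allpairs_uniq_dep; first exact: iota_uniq.
  by move=> x _; exact: iota_uniq.
by move=> [a b] [c d] _ _ /= [-> ->].
Qed.

Lemma card_V : #|{: Tvert k}| = size verts.
Proof.
rewrite cardT -(size_map (@enc k)); apply: perm_size.
apply: uniq_perm; first by rewrite (map_inj_uniq enc_inj) enum_uniq.
  exact: uniq_verts.
move=> p; rewrite mem_verts; apply/mapP/idP => [[x _ ->] | hp].
  exact: enc_valid.
by exists (mv Hk p); rewrite ?mem_enum ?enc_mv.
Qed.

End Enc.

Lemma sumn_iotaS n : 2 * sumn [seq i.+1 | i <- iota 0 n] = n * n.+1.
Proof.
elim: n => // n IH.
rewrite -[n.+1]addn1 iotaD map_cat sumn_cat /= mulnDr IH; nia.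
Qed.

Lemma sumn_iota0 n : 2 * sumn [seq i | i <- iota 0 n] = n * n.-1.
Proof.
elim: n => // n IH.
rewrite -[n.+1]addn1 iotaD map_cat sumn_cat /= mulnDr IH; nia.
Qed.

Lemma size_verts k : 2 * size (verts k) = k * k.+1.
Proof.
rewrite /verts size_allpairs_dep -(sumn_iotaS k); congr (2 * _); congr sumn.
by apply: eq_map => i; rewrite size_iota.
Qed.

Definition EL k : seq ((nat * nat) * (nat * nat)) :=
  [seq ((i, j), (i, j.+1)) | i <- iota 0 k, j <- iota 0 i] ++
  [seq ((i, j), (i.+1, j)) | i <- iota 0 k.-1, j <- iota 0 i.+1] ++
  [seq ((i, j), (i.+1, j.+1)) | i <- iota 0 k.-1, j <- iota 0 i.+1].

Lemma mem_EL k (e : (nat * nat) * (nat * nat)) :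
  (e \in EL k) = [&& validp k e.1, validp k e.2 & adj0N e.1 e.2].
Proof.
case: e => [[a b] [c d]]; rewrite /validp /adj0N /= !mem_cat.
apply/idP/idP.
  case/or3P => /allpairsPdep [i [j [hi hj [-> -> -> ->]]]];
   move: hi hj; rewrite !mem_iota; lia.
move=> h.
case: (eqVneq c a) => [ca|ca].
  apply/orP; left; apply/allpairsPdep; exists a, b.
  split; [rewrite mem_iota | rewrite mem_iota | congr ((_, _), (_, _))]; lia.
apply/orP; right; apply/orP.
case: (eqVneq d b) => [db|db].
  left; apply/allpairsPdep; exists a, b.
  split; [rewrite mem_iota | rewrite mem_iota | congr ((_, _), (_, _))]; lia.
right; apply/allpairsPdep; exists a, b.
split; [rewrite mem_iota | rewrite mem_iota | congr ((_, _), (_, _))]; lia.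
Qed.

Lemma mem_ap (X : eqType) (f : nat -> nat -> X) s t e :
  e \in [seq f x y | x <- s, y <- t x] -> exists x y, e = f x y.
Proof. by move=> /allpairsPdep [x [y [_ _ ->]]]; exists x, y. Qed.

Lemma uniq_EL k : uniq (EL k).
Proof.
have inj2 : forall (f : nat -> nat -> (nat * nat) * (nat * nat)),
   (forall a b c d, f a b = f c d -> a = c /\ b = d) ->
   forall s t, uniq s -> (forall x, uniq (t x)) -> uniq [seq f x y | x <- s, y <- t x].
  move=> f hf s t us ut; apply: allpairs_uniq_dep => //.
  by move=> [a b] [c d] _ _ /= /hf [-> ->].
rewrite /EL.
set s1 := [seq _ | i <- iota 0 k, j <- iota 0 i].
set s2 := [seq ((i, j), (i.+1, j)) | i <- _, j <- _].
set s3 := [seq ((i, j), (i.+1, j.+1)) | i <- _, j <- _].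
have u1 : uniq s1 by apply: inj2; [move=> a b c d [-> ->] | apply: iota_uniq | move=> ?; apply: iota_uniq].
have u2 : uniq s2 by apply: inj2; [move=> a b c d [-> ->] | apply: iota_uniq | move=> ?; apply: iota_uniq].
have u3 : uniq s3 by apply: inj2; [move=> a b c d [-> ->] | apply: iota_uniq | move=> ?; apply: iota_uniq].
rewrite !cat_uniq u1 u2 u3 /= andbT; apply/andP; split.
  apply/hasPn => e; rewrite mem_cat => /orP [] /mem_ap [i [j ->]];
  apply/negP => /mem_ap [i' [j' []]]; lia.
apply/hasPn => e /mem_ap [i [j ->]].
apply/negP => /mem_ap [i' [j' []]]; lia.
Qed.

Lemma size_EL k : 2 * size (EL k) = 3 * (k * k.-1).
Proof.
rewrite /EL !size_cat !size_allpairs_dep.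
have e1 : [seq size (iota 0 i) | i <- iota 0 k] = [seq i | i <- iota 0 k].
  by apply: eq_map => i; rewrite size_iota.
have e2 : [seq size (iota 0 i.+1) | i <- iota 0 k.-1] = [seq i.+1 | i <- iota 0 k.-1].
  by apply: eq_map => i; rewrite size_iota.
rewrite e1 e2 !mulnDr sumn_iota0 sumn_iotaS.
clear e1 e2; case: k => //= k; nia.
Qed.

Definition fE k (Hk : 0 < k) (e : (nat * nat) * (nat * nat)) : {set Tvert k} :=
  [set mv Hk e.1; mv Hk e.2].

Lemma adj0N_asym u v : adj0N u v -> adj0N v u -> False.
Proof. rewrite /adj0N; lia. Qed.

Lemma edges_EL k (Hk : 0 < k) : perm_eq (map (fE Hk) (EL k)) (enum (edges (Tadj k))).
Proof.
apply: uniq_perm; last 2 first.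
- exact: enum_uniq.
- move=> x; rewrite mem_enum /edges inE; apply/mapP/existsP.
    move=> [e he ->]; move: he; rewrite mem_EL => /and3P [h1 h2 h3].
    exists (mv Hk e.1); apply/existsP; exists (mv Hk e.2).
    by rewrite Tadj_enc !enc_mv // /adjN h3 eqxx.
  move=> [x' /existsP [y /andP [hxy /eqP ->]]].
  move: hxy; rewrite Tadj_enc /adjN => /orP [] h.
    exists (enc x', enc y); first by rewrite mem_EL !enc_valid h.
    by rewrite /fE /= !mv_enc.
  exists (enc y, enc x'); first by rewrite mem_EL !enc_valid h.
  by rewrite /fE /= !mv_enc setUC.
rewrite map_inj_in_uniq ?uniq_EL //.
move=> [a b] [c d]; rewrite !mem_EL /= => /and3P [va vb ab] /and3P [vc vd cd].
rewrite /fE /= => E; case: (set2_eq E) => [[h1 h2] | [h1 h2]].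
  by rewrite (mv_inj va vc h1) (mv_inj vb vd h2).
move: ab; rewrite (mv_inj va vd h1) (mv_inj vb vc h2) => ab.
by case: (adj0N_asym ab cd).
Qed.

Lemma card_edges k (Hk : 0 < k) : #|edges (Tadj k)| = size (EL k).
Proof. by rewrite cardE -(perm_size (edges_EL Hk)) size_map. Qed.

Lemma mod_lt2 x m : x < 2 * m -> x %% m = (if x < m then x else x - m).
Proof. move=> h2; case: (ltnP x m) => h1; first by rewrite modn_small.
rewrite -{1}(subnK h1) modnDr modn_small //. lia. Qed.

Lemma gap m N a b : 2 * N < m ->
  exists2 i, i < m & forall t, t < N -> ((i + t) %% m != a) && ((i + t) %% m != b).
Proof.
wlog ab : a b / a <= b.
  move=> H hm; case: (leqP a b) => h; first exact: H.
  have [i hi Hi] := H b a (ltnW h) hm; exists i => // t ht.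
  by rewrite andbC Hi.
move=> hm.
case: (ltnP b m) => bm.
  case: (ltnP (a + N) b) => aNb.
    exists a.+1; first lia.
    move=> t ht; rewrite mod_lt2; last lia.
    case: ifP => ?; lia.
  case: (ltnP b.+1 m) => b1m.
    exists b.+1 => // t ht; rewrite mod_lt2; last lia.
    case: ifP => ?; lia.
  exists 0; first lia.
  move=> t ht; rewrite modn_small; lia.
case: (ltnP a.+1 m) => a1m.
  exists a.+1 => // t ht; rewrite mod_lt2; last lia.
  case: ifP => ?; lia.
exists 0; first lia.
move=> t ht; rewrite modn_small; lia.
Qed.

Lemma corner_nb k (Hk : 0 < k) (z : Tvert k) :
  adjN (0, 0) (enc z) -> z = mv Hk (1, 0) \/ z = mv Hk (1, 1).
Proof.
move=> h; have hv := enc_valid z; have hz := mv_enc Hk z.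
move: h hv hz; case: (enc z) => a b h hv <-.
have : (a == 1) && ((b == 0) || (b == 1)) by move: h hv; rewrite /adjN /adj0N /validp /=; lia.
by case/andP => /eqP -> /orP [] /eqP ->; [left | right].
Qed.

Lemma Tadj_sym k (x y : Tvert k) : Tadj k x y = Tadj k y x.
Proof. by rewrite /Tadj orbC. Qed.

Lemma not_co k : 5 <= k -> ~ cyclically_orderable (Tadj k).
Proof.
move=> k5 [s [hperm hwin]].
have Hk : 0 < k by lia.
have hm : size s = size (EL k) by rewrite (perm_size hperm) -cardE card_edges.
have hn := card_V Hk.
have sv := size_verts k; have se := size_EL k.
have hNm : 2 * #|{: Tvert k}|.-1 < size s by rewrite hn hm; nia.
have us : uniq s by rewrite (perm_uniq hperm) enum_uniq.
have v0 : validp k (0, 0) by rewrite /validp /=; lia.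
have v1 : validp k (1, 0) by rewrite /validp /=; lia.
set v := mv Hk (0, 0).
set e1 := [set v; mv Hk (1, 0)].
set e2 := [set v; mv Hk (1, 1)].
have claimA : forall j, j < size s -> v \in nth set0 s j ->
    j = index e1 s \/ j = index e2 s.
  move=> j hj hv.
  have : nth set0 s j \in edges (Tadj k) by rewrite -mem_enum -(perm_mem hperm) mem_nth.
  rewrite inE => /existsP [x /existsP [y /andP [hxy /eqP E]]].
  have key : forall z, Tadj k v z -> [set v; z] = e1 \/ [set v; z] = e2.
    move=> z; rewrite Tadj_enc /v enc_mv // => /(corner_nb Hk) [] ->; [left | right] => //.
  have : [set v; if x == v then y else x] = e1 \/ [set v; if x == v then y else x] = e2.
    rewrite E in hv; case/set2P: hv => hv.
      by rewrite -hv eqxx; apply: key; rewrite hv.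
    case: eqP => [hxv | hxv]; first by apply: key; rewrite -hxv.
    by apply: key; rewrite hv Tadj_sym.
  have -> : [set v; if x == v then y else x] = nth set0 s j.
    rewrite E; case: eqP => [-> // | hxv].
    by rewrite E in hv; case/set2P: hv => [/esym // | ->]; rewrite setUC.
  by case=> <-; [left | right]; rewrite index_uniq.
have [i hi Hi] := gap (index e1 s) (index e2 s) hNm.
case: (hwin i hi) => _ hconn _.
move: (hconn v (mv Hk (1, 0))) => /connectP [p hp hl].
case: p hp hl => [/= _ hl | z p /= /andP [hvz _] _].
  by have := mv_inj v1 v0 hl.
move: hvz => /andP [_ /imsetP [t _ E]].
have hs : 0 < size s by lia.
have := claimA _ (ltn_pmod (i + t) hs).
rewrite -E set21 => /(_ isT).
have := Hi t (ltn_ord t).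
by case/andP => /eqP h1 /eqP h2 [].
Qed.

Notation edge := ((nat * nat) * (nat * nat))%type.

Fixpoint look (p : nat * nat) (A : seq (nat * nat * (nat * nat * nat))) : option (nat * nat * nat) :=
  if A is (q, x) :: A' then (if q == p then Some x else look p A') else None.

Definition step (W : seq edge) (A : seq (nat * nat * (nat * nat * nat))) :=
  foldl (fun A (e : edge) =>
    match look e.1 A, look e.2 A with
    | Some (_, du), None => (e.2, (e.1, du.+1)) :: A
    | None, Some (_, dv) => (e.1, (e.2, dv.+1)) :: A
    | _, _ => A
    end) A W.

Definition bfsA (r : nat * nat) (W : seq edge) := iter (size W) (step W) [:: (r, (r, 0))].
Definition parA A (p : nat * nat) := if look p A is Some (q, _) then q else p.
Definition depA A (p : nat * nat) := if look p A is Some (_, d) then d else 0.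

Definition chkW k (r : nat * nat) (par : nat * nat -> nat * nat) (d : nat * nat -> nat) (W : seq edge) :=
  [&& validp k r,
      all (fun e : edge => [&& validp k e.1, validp k e.2 & adjN e.1 e.2]) W,
      all (fun p => (p == r) || ((((p, par p) \in W) || ((par p, p) \in W)) && (d (par p) < d p))) (verts k) &
      all (fun e : edge => ((e.1 != r) && (e.2 == par e.1)) || ((e.2 != r) && (e.1 == par e.2))) W].

Definition winN (L : seq edge) N i := [seq nth ((0, 0), (0, 0)) L ((i + t) %% size L) | t <- iota 0 N].

Definition chk_all k (L : seq edge) :=
  perm_eq L (EL k) &&
  all (fun i => let W := winN L (size (verts k)).-1 i in
                let A := bfsA (0, 0) W in chkW k (0, 0) (parA A) (depA A) W) (iota 0 (size L)).

Definition L2 : seq edge := [:: ((0, 0), (1, 0)); ((0, 0), (1, 1)); ((1, 0), (1, 1))].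
Definition L3 : seq edge := [:: ((0, 0), (1, 0)); ((1, 0), (1, 1)); ((1, 0), (2, 0)); ((2, 1), (2, 2)); ((1, 1), (2, 1)); ((0, 0), (1, 1)); ((1, 0), (2, 1)); ((2, 0), (2, 1)); ((1, 1), (2, 2))].
Definition L4 : seq edge := [:: ((0, 0), (1, 0)); ((2, 0), (2, 1)); ((2, 2), (3, 3)); ((2, 2), (3, 2)); ((1, 1), (2, 2)); ((2, 0), (3, 1)); ((3, 1), (3, 2)); ((1, 0), (2, 1)); ((3, 0), (3, 1)); ((0, 0), (1, 1)); ((1, 0), (2, 0)); ((3, 2), (3, 3)); ((2, 1), (2, 2)); ((1, 1), (2, 1)); ((2, 1), (3, 1)); ((2, 1), (3, 2)); ((1, 0), (1, 1)); ((2, 0), (3, 0))].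

Lemma chk1 : chk_all 1 [::]. Proof. by vm_compute. Qed.
Lemma chk2 : chk_all 2 L2. Proof. by vm_compute. Qed.
Lemma chk3 : chk_all 3 L3. Proof. by vm_compute. Qed.
Lemma chk4 : chk_all 4 L4. Proof. by vm_compute. Qed.

Section Window.
Variables (k : nat) (Hk : 0 < k).

Lemma window_tree (L : seq edge) N i r par d :
  0 < size L -> chkW k r par d (winN L N i) ->
  spanning_tree (Tadj k)
    [set nth set0 (map (fE Hk) L) ((i + t) %% size L) | t : 'I_N].
Proof.
move=> hL /and4P [vr /allP c1 /allP c2 /allP c3].
set W := winN L N i.
set F := [set _ | t : 'I_N].
have memF : forall e, e \in F -> exists2 w, w \in W & e = fE Hk w.
  move=> e /imsetP [t _ ->].
  exists (nth ((0, 0), (0, 0)) L ((i + t) %% size L)).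
    by apply/mapP; exists (nat_of_ord t); rewrite // mem_iota /=.
  by rewrite (nth_map ((0, 0), (0, 0))) // ltn_pmod.
have Fmem : forall w, w \in W -> fE Hk w \in F.
  move=> w /mapP [t]; rewrite mem_iota /= => ht ->.
  apply/imsetP; exists (Ordinal ht) => //=.
  by rewrite (nth_map ((0, 0), (0, 0))) // ltn_pmod.
have enc_r : forall x : Tvert k, x != mv Hk r -> enc x != r.
  move=> x; apply: contra => /eqP <-; by rewrite mv_enc.
have [hc ha] : (forall x y, connect (adjF F) x y) /\ ~ has_cycle F.
  apply: (@tree_cert _ F (mv Hk r) (fun x => mv Hk (par (enc x))) (fun x => d (enc x))).
  + move=> x xr.
    have hx : enc x \in verts k by rewrite mem_verts ?enc_valid.
    have := c2 _ hx; rewrite (negbTE (enc_r x xr)) /=.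
    case/andP => /orP [] hw hd.
      have /and3P [_ vp _] := c1 _ hw.
      split; last by rewrite enc_mv.
      by have := Fmem _ hw; rewrite /fE /= mv_enc.
    have /and3P [vp _ _] := c1 _ hw.
    split; last by rewrite enc_mv.
    by have := Fmem _ hw; rewrite /fE /= mv_enc setUC.
  + move=> e /memF [w hw ->].
    have /and3P [v1 v2 _] := c1 w hw.
    case/orP: (c3 w hw) => /andP [wr /eqP hp].
      exists (mv Hk w.1).
        by apply: contra wr => /eqP /(mv_inj v1 vr) ->.
      by rewrite enc_mv // -hp.
    exists (mv Hk w.2).
      by apply: contra wr => /eqP /(mv_inj v2 vr) ->.
    by rewrite enc_mv // -hp /fE setUC.
split => //.
apply/subsetP => e /memF [w hw ->].
have /and3P [h1 h2 h3] := c1 w hw.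
rewrite inE; apply/existsP; exists (mv Hk w.1); apply/existsP; exists (mv Hk w.2).
by rewrite Tadj_enc !enc_mv // h3 eqxx.
Qed.

Lemma co_of_chk (L : seq edge) : chk_all k L -> cyclically_orderable (Tadj k).
Proof.
case/andP => hperm /allP hw.
exists (map (fE Hk) L); split.
  exact: perm_trans (perm_map (fE Hk) hperm) (edges_EL Hk).
move=> i; rewrite size_map => hi.
have := hw i; rewrite mem_iota /= => /(_ hi) hc.
rewrite (card_V Hk).
exact: window_tree (leq_ltn_trans (leq0n i) hi) hc.
Qed.

End Window.

Theorem mainTheorem2 (k : nat) :
  0 < k -> (cyclically_orderable (Tadj k) <-> k <= 4).
Proof.
move=> Hk; split.
  by move=> h; case: (leqP k 4) => // k5; case: (not_co k5 h).
move=> k4.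
case: k Hk k4 => [//|[|[|[|[|//]]]]] Hk _.
- exact (co_of_chk Hk chk1).
- exact (co_of_chk Hk chk2).
- exact (co_of_chk Hk chk3).
- exact (co_of_chk Hk chk4).
Qed.
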